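(* Let $T=(V,E)$ be a temporal bipartite graph with $m=|E|$ edges, let $\tau>0$, $i\in\{1,\dots,6\}$ and $\varepsilon,\delta\in(0,1)$. Then (a) if $p\ge\frac{1}{1+\delta\varepsilon^2}$, the estimator $\widehat{C}_i$ returned by \texttt{TBC-E} or by \texttt{TBC-N} with sampling probability $p$ is an $(\varepsilon,\delta)$-estimator of $C_i$; and (b) for any $c>0$, if $s\ge\frac{(m-1)\ln(2/\delta)}{(1+\varepsilon)\ln(1+\varepsilon)-\varepsilon}$, the estimator $\widehat{C}_i$ returned by \texttt{TBC-I} with parameters $s,c$ is an $(\varepsilon,\delta)$-estimator of $C_i$. Here $\widehat{C}_i$ is an $(\varepsilon,\delta)$-estimator of $C_i$ if $\Pr[|\widehat{C}_i-C_i|\ge\varepsilon C_i]\le\delta$.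
   Context: A temporal bipartite graph $T=(V,E)$ has node set $V=U\cup L$ with $U\cap L=\emptyset$ and a finite (multi)set $E\subseteq U\times L\times\mathbb{R}^+$ of temporal edges $(u,l,t)$; $m=|E|$. A temporal butterfly $B_i$ ($i=1,\dots,6$) is the butterfly on nodes $u'_1,u'_2$ (upper side) and $l'_1,l'_2$ (lower side) with edges $(u'_1,l'_1),(u'_2,l'_1),(u'_1,l'_2),(u'_2,l'_2)$ together with an ordering $\sigma_i$ of these four edges; $\sigma_1,\dots,\sigma_6$ are the six orderings in which $(u'_1,l'_1)$ comes first. Given $\tau>0$, a set $S$ of four temporal edges $\{(u_x,l_x,t_1),(u_y,l_x,t_2),(u_x,l_y,t_3),(u_y,l_y,t_4)\}$ of $T$ with $u_x\ne u_y\in U$, $l_x\ne l_y\in L$ is a $\tau$-instance of $B_i$ if, under the map $u_x\mapsto u'_1,u_y\mapsto u'_2,l_x\mapsto l'_1,l_y\mapsto l'_2$, the order of the four edges by timestamp matches $\sigma_i$ (so $(u_x,l_x,t_1)$ has the smallest timestamp), and $\max_{j\in\{2,3,4\}}t_j-t_1\le\tau$. $C_i$ is the number of $\tau$-instances of $B_i$ in $T$; for $e\in E$, $C_i(e)$ is the number of $\tau$-instances of $B_i$ whose first (smallest-timestamp) edge is $e$. \texttt{TBC-E}: each edge $e\in E$ is put into $\widehat{E}$ independently with probability $p$; output $\widehat{C}_i=\sum_{e\in\widehat{E}}C_i(e)/p$. \texttt{TBC-N}: each node $u\in U$ (alternatively, each node of $L$) is put into $\widehat{U}$ independently with probability $p$;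 $\widehat{E}$ is the set of edges incident to $\widehat{U}$; output $\widehat{C}_i=\sum_{e\in\widehat{E}}C_i(e)/p$. \texttt{TBC-I} with parameters $s\in\mathbb{Z}_{>0}$, $c>0$: draw $s$ edges from $E$ uniformly at random and independently; for each drawn edge with timestamp $t'$, add to the multiset $\widehat{E}$ every edge of $E$ with timestamp in $[t',t'+c\tau]$; for $e=(u,l,t)$ let $m'_e$ be the number of edges of $E$ with timestamp in $[t-c\tau,t]$; output $\widehat{C}_i=\sum_{e\in\widehat{E}}\frac{m}{s\,m'_e}C_i(e)$ (counting multiplicities). *)

(* Defs.v *)
From mathcomp Require Import all_boot all_order all_algebra.
From mathcomp Require Import reals exp.

Set Implicit Arguments.
Unset Strict Implicit.
Unset Printing Implicit Defensive.
Import Order.TTheory GRing.Theory Num.Theory.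
Local Open Scope ring_scope.

(* A temporal bipartite graph: upper nodes U, lower nodes L (two distinct
   finite types, hence disjoint), and a finite multiset of m temporal edges,
   given as a family E : 'I_m -> U * L * R (indices make repetitions
   possible).  Positivity of timestamps is a hypothesis of the theorem. *)

Section TBG.
Variables (R : realType) (U L : finType) (m : nat) (E : 'I_m -> U * L * R).

Definition eu (e : 'I_m) : U := (E e).1.1.
Definition el (e : 'I_m) : L := (E e).1.2.
Definition et (e : 'I_m) : R := (E e).2.

(* Roles of the four butterfly edges:
   0 = (u'1,l'1), 1 = (u'2,l'1), 2 = (u'1,l'2), 3 = (u'2,l'2).
   sigma i lists the roles in increasing time order; these are the six
   orderings with (u'1,l'1) first. *)
Definition sigma (i : 'I_6) : seq nat :=
  nth [:: 0; 1; 2; 3]%N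
    [:: [:: 0; 1; 2; 3]; [:: 0; 1; 3; 2]; [:: 0; 2; 1; 3];
        [:: 0; 2; 3; 1]; [:: 0; 3; 1; 2]; [:: 0; 3; 2; 1]]%N i.

(* (a,b,c,d) = ((u_x,l_x,t1),(u_y,l_x,t2),(u_x,l_y,t3),(u_y,l_y,t4)) is a
   tau-instance of B_i. *)
Definition is_instance (i : 'I_6) (tau : R) (a b c d : 'I_m) : bool :=
  let ts := [:: et a; et b; et c; et d] in
  [&& eu a == eu c, eu b == eu d, el a == el b, el c == el d,
      eu a != eu b, el a != el c,
      [forall k : 'I_3,
         nth 0 ts (nth 0%N (sigma i) k) < nth 0 ts (nth 0%N (sigma i) k.+1)],
      et b - et a <= tau, et c - et a <= tau & et d - et a <= tau].

Definition count_inst (i : 'I_6) (tau : R) : R :=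
  #|[set x : 'I_m * 'I_m * 'I_m * 'I_m |
      is_instance i tau x.1.1.1 x.1.1.2 x.1.2 x.2]|%:R.

Definition count_inst_e (i : 'I_6) (tau : R) (e : 'I_m) : R :=
  #|[set x : 'I_m * 'I_m * 'I_m | is_instance i tau e x.1.1 x.1.2 x.2]|%:R.

(* TBC-E : outcome w : {ffun 'I_m -> bool} (w e = e sampled). *)
Definition tbcE_weight (p : R) (w : {ffun 'I_m -> bool}) : R :=
  \prod_(e : 'I_m) (if w e then p else 1 - p).
Definition tbcE_est (i : 'I_6) (tau p : R) (w : {ffun 'I_m -> bool}) : R :=
  \sum_(e : 'I_m | w e) count_inst_e i tau e / p.

Definition tbcNU_weight (p : R) (w : {ffun U -> bool}) : R :=
  \prod_(u : U) (if w u then p else 1 - p).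
Definition tbcNU_est (i : 'I_6) (tau p : R) (w : {ffun U -> bool}) : R :=
  \sum_(e : 'I_m | w (eu e)) count_inst_e i tau e / p.

Definition tbcNL_weight (p : R) (w : {ffun L -> bool}) : R :=
  \prod_(l : L) (if w l then p else 1 - p).
Definition tbcNL_est (i : 'I_6) (tau p : R) (w : {ffun L -> bool}) : R :=
  \sum_(e : 'I_m | w (el e)) count_inst_e i tau e / p.

(* TBC-I : outcome w : {ffun 'I_s -> 'I_m}, the s independent uniform draws. *)
Definition tbcI_weight (s : nat) (w : {ffun 'I_s -> 'I_m}) : R :=
  (m%:R ^+ s)^-1.
Definition mprime (c tau : R) (e : 'I_m) : R :=
  #|[set f : 'I_m | (et e - c * tau <= et f) && (et f <= et e)]|%:R.
(* sum over the multiset \hat E (one copy per draw whose window contains e) *)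
Definition tbcI_est (i : 'I_6) (tau c : R) (s : nat)
    (w : {ffun 'I_s -> 'I_m}) : R :=
  \sum_(j : 'I_s)
    \sum_(e : 'I_m | (et (w j) <= et e) && (et e <= et (w j) + c * tau))
      m%:R / (s%:R * mprime c tau e) * count_inst_e i tau e.

End TBG.

Definition prob (R : realType) (Omega : finType) (wt : Omega -> R)
    (A : pred Omega) : R :=
  \sum_(w : Omega | A w) wt w.

Definition eps_delta_estimator (R : realType) (Omega : finType)
    (wt : Omega -> R) (X : Omega -> R) (C eps delta : R) : Prop :=
  prob wt (fun w => eps * C <= `|X w - C|) <= delta.

(* Main.v *)
Require Import Defs.
From mathcomp Require Import all_boot all_order all_algebra.
From mathcomp Require Import reals exp.
From mathcomp Require Import boolp classical_sets topology normedtype sequences.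
From mathcomp Require Import ring lra zify.
Import Order.TTheory GRing.Theory Num.Theory numFieldNormedType.Exports.
Local Open Scope ring_scope.

Section AnalysisPart.
Local Open Scope classical_set_scope.

Section An.
Variable R : realType.

Lemma exp_cvg (x : R) : series (exp_coeff x) @ \oo --> expR x.
Proof. exact: is_cvg_series_exp_coeff. Qed.

Lemma series_S (x : R) n : series (exp_coeff x) n.+1 = series (exp_coeff x) n + x ^+ n / n`!%:R.
Proof. by rewrite /series /= big_nat_recr. Qed.

Lemma series_le_exp (x : R) n : 0 <= x -> series (exp_coeff x) n <= expR x.
Proof.
move=> x0; apply: (@cvgr_to_ge _ _ _ _ _ _ _ (exp_cvg x)).
exists n => // k /= nk.
elim: k nk => [|k IH]; first by rewrite leqn0 => /eqP ->.
rewrite leq_eqVlt => /orP[/eqP <-//|]; rewrite ltnS => /IH h.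
rewrite series_S (le_trans h)// lerDl divr_ge0// exprn_ge0//.
Qed.

Lemma series4 (w : R) : series (exp_coeff w) 4 = 1 + w + w^+2 / 2 + w^+3 / 6.
Proof.
rewrite !series_S /series /= big_geq // add0r.
rewrite !factS fact0 /= expr0 expr1 !divr1. 
by [].
Qed.

Lemma exp_le_neg (z : R) : z <= 0 -> expR z <= 1 + z + z^+2 / 2.
Proof.
move=> z0; set w := - z.
have w0 : 0 <= w by rewrite /w oppr_ge0.
have h := @series_le_exp w 4 w0; rewrite series4 in h.
have e1 : expR z * expR w = 1 by rewrite /w expRxMexpNx_1.
have ep : 0 < expR w := expR_gt0 w.
have ez : 0 < expR z := expR_gt0 z.
have zw : z = - w by rewrite /w opprK.
rewrite zw in e1 ez *.
set a := expR (- w) in e1 ez *; set b := expR w in e1 ep h *.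
set q := 1 + - w + (- w)^+2 / 2.
have hq : 0 < q by rewrite /q; nra.
have P : 1 <= q * (1 + w + w ^+ 2 / 2 + w ^+ 3 / 6).
  rewrite /q; have w3 : 0 <= w^+3 by rewrite exprn_ge0.
  have w4 : 0 <= w^+4 by rewrite exprn_ge0.
  have w5 : 0 <= w^+5 by rewrite exprn_ge0.
  have -> : (1 + - w + (- w) ^+ 2 / 2) * (1 + w + w ^+ 2 / 2 + w ^+ 3 / 6) = 1 + w^+3/6 + w^+4/12 + w^+5/12.
    by rewrite !exprS expr0; field.
  lra.
have qb : 1 <= q * b by apply: le_trans P _; rewrite ler_wpM2l // ltW.
have -> : a = a * 1 by rewrite mulr1.
apply: le_trans (_ : a * (q * b) <= q).
  by rewrite ler_wpM2l // ltW.
by rewrite mulrCA e1 mulr1.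
Qed.

Lemma exp_ge_pos (x : R) : 0 <= x -> 1 + x + x^+2 / 2 <= expR x.
Proof.
move=> x0; have h := @series_le_exp x 4 x0; rewrite series4 in h.
apply: le_trans h; rewrite lerDl divr_ge0 // exprn_ge0 //.
Qed.

End An.
Section An2.
Variable R : realType.

Lemma K1pos (z x : R) : 0 <= z -> z <= x ->
  x^+2 * (expR z - 1 - z) <= z^+2 * (expR x - 1 - x).
Proof.
move=> z0 zx.
have x0 : 0 <= x by apply: le_trans zx.
pose u n := z^+2 * series (exp_coeff x) n - x^+2 * series (exp_coeff z) n.
have cu : u @ \oo --> z^+2 * expR x - x^+2 * expR z.
  have c1 : (fun n => z^+2 * series (exp_coeff x) n) @ \oo --> z^+2 * expR x.
    apply: (cvgMl_tmp (g := series (exp_coeff x))); exact: exp_cvg.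
  have c2 : (fun n => x^+2 * series (exp_coeff z) n) @ \oo --> x^+2 * expR z.
    apply: (cvgMl_tmp (g := series (exp_coeff z))); exact: exp_cvg.
  exact: cvgB c1 c2.
have : z^+2 * (1 + x) - x^+2 * (1 + z) <= z^+2 * expR x - x^+2 * expR z.
  apply: (cvgr_to_ge cu); exists 2%N => // n /= n2.
  elim: n n2 => [//|n IH].
  rewrite leq_eqVlt => /orP[/eqP <-|].
    rewrite /u !series_S /series /= !big_geq // !add0r /= !expr0 !expr1.
    by rewrite !divr1 /=.
  move=> n2; have h := IH n2; apply: le_trans h _.
  rewrite /u !series_S.
  have : x^+2 * (z ^+ n / n`!%:R) <= z^+2 * (x ^+ n / n`!%:R).
    rewrite !mulrA ler_wpM2r // ?invr_ge0 //.
    have -> : n = (n - 2 + 2)%N by rewrite subnK.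
    rewrite !exprD mulrC mulrA [z^+2 * _]mulrC ler_wpM2r ?exprn_ge0 //.
    apply: ler_wpM2r; first exact: exprn_ge0.
    by apply: lerXn2r; rewrite ?nnegrE.
  lra.
lra.
Qed.
End An2.
Section An3.
Variable R : realType.

Lemma K1 (z x : R) : z <= x -> 0 <= x ->
  x^+2 * (expR z - 1 - z) <= z^+2 * (expR x - 1 - x).
Proof.
move=> zx x0; case: (leP 0 z) => z0; first exact: K1pos.
have h1 := @exp_le_neg R z (ltW z0).
have h2 := @exp_ge_pos R x x0.
have a : x^+2 * (expR z - 1 - z) <= x^+2 * (z^+2/2).
  by apply: ler_wpM2l; [exact: sqr_ge0| lra].
have b : z^+2 * (x^+2/2) <= z^+2 * (expR x - 1 - x).
  by apply: ler_wpM2l; [exact: sqr_ge0| lra].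
apply: le_trans a _; apply: le_trans b.
by rewrite le_eqVlt; apply/orP; left; apply/eqP; field.
Qed.

Lemma hpos (eps : R) : 0 < eps -> 0 < (1 + eps) * ln (1 + eps) - eps.
Proof.
move=> e0; set L := ln (1 + eps).
have p : 0 < 1 + eps by lra.
have eL : expR L = 1 + eps by rewrite /L lnK.
have L0 : 0 < L by rewrite /L ln_gt0 // ltrDl.
have h := @expR_gt1Dx R (- L); rewrite oppr_eq0 gt_eqF // in h.
have h' := h isT; rewrite expRN eL -div1r ltr_pdivlMr // in h'.
nra.
Qed.
End An3.
Section Draw.
Variable R : realType.

Lemma exp_quad (z L : R) : z <= L -> 0 < L ->
  expR z <= 1 + z + z^+2 * ((expR L - 1 - L) / L^+2).
Proof.
move=> zL L0; have h := @K1 R z L zL (ltW L0).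
have L2 : 0 < L^+2 by rewrite exprn_gt0.
have : expR z - 1 - z <= z^+2 * ((expR L - 1 - L) / L^+2).
  by rewrite mulrA ler_pdivlMr // mulrC.
lra.
Qed.

Lemma draw_bound (m : nat) (g : 'I_m -> R) (k mu L : R) :
  0 < k -> 0 < mu -> 0 < L ->
  \sum_x g x = 0 -> (forall x, g x <= k * mu) ->
  \sum_x g x ^+ 2 <= m%:R * k * mu^+2 ->
  \sum_x expR (L / (k * mu) * g x) <= m%:R * expR ((expR L - 1 - L) / k).
Proof.
move=> k0 mu0 L0 gs gk g2.
set lam := L / (k * mu); set ph := expR L - 1 - L.
have ph0 : 0 <= ph by rewrite /ph; have := expR_ge1Dx L; lra.
have lam0 : 0 < lam by rewrite /lam divr_gt0 // mulr_gt0.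
have step : forall x, expR (lam * g x) <= 1 + lam * g x + (lam * g x)^+2 * (ph / L^+2).
  move=> x; apply: exp_quad => //.
  have -> : L = lam * (k * mu) by rewrite /lam divfK // gt_eqF // mulr_gt0.
  by rewrite ler_wpM2l // ltW.
apply: le_trans (ler_sum _ (fun x _ => step x)) _.
rewrite big_split /= big_split /= sumr_const card_ord -mulr_sumr gs mulr0 addr0.
under eq_bigr do rewrite exprMn -mulrA.
rewrite -mulr_sumr.
have e1 : (1 *+ m : R) = m%:R by [].
rewrite e1.
have A : lam^+2 * \sum_i (g i ^+ 2 * (ph / L ^+ 2)) <= m%:R * (ph / k).
  rewrite -mulr_suml.
  apply: le_trans (_ : lam^+2 * (m%:R * k * mu ^+ 2 * (ph / L^+2)) <= _).
    apply: ler_wpM2l; first exact: sqr_ge0.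
    apply: ler_wpM2r => //; apply: divr_ge0 => //; exact: sqr_ge0.
  rewrite le_eqVlt; apply/orP; left; apply/eqP.
  rewrite /lam; field; rewrite ?gt_eqF //.
apply: le_trans (_ : m%:R + m%:R * (ph / k) <= _); first by rewrite lerD2l.
rewrite -[X in X + _]mulr1 -mulrDr ler_wpM2l //.
exact: expR_ge1Dx.
Qed.
End Draw.
Section Chern.
Variable R : realType.

Lemma prod_sum_ffun (I J : finType) (F : I -> J -> R) :
  \sum_(f : {ffun I -> J}) \prod_i F i (f i) = \prod_i \sum_j F i j.
Proof. by rewrite bigA_distr_bigA. Qed.

Lemma chernoff (m s : nat) (g : 'I_m -> R) (lam a : R) : (0 < m)%N -> 0 <= lam ->
  \sum_(w : {ffun 'I_s -> 'I_m} | a <= \sum_j g (w j)) (m%:R ^+ s)^-1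
   <= expR (- (lam * a)) * ((\sum_x expR (lam * g x)) / m%:R) ^+ s.
Proof.
move=> m0 l0.
set c := (m%:R ^+ s)^-1 : R.
have c0 : 0 <= c by rewrite /c invr_ge0 exprn_ge0.
apply: le_trans (_ : \sum_(w : {ffun 'I_s -> 'I_m} | a <= \sum_j g (w j))
     c * expR (lam * (\sum_j g (w j) - a)) <= _).
  apply: ler_sum => w hw; rewrite -[X in X <= _]mulr1 ler_wpM2l //.
  by rewrite -expR0 ler_expR mulr_ge0 // subr_ge0.
apply: le_trans (_ : \sum_(w : {ffun 'I_s -> 'I_m})
     c * expR (lam * (\sum_j g (w j) - a)) <= _).
  rewrite [leLHS]big_mkcond /=; apply: ler_sum => w _.
  by case: ifP => // _; rewrite mulr_ge0 // expR_ge0.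
rewrite le_eqVlt; apply/orP; left; apply/eqP.
transitivity (c * expR (- (lam * a)) * \sum_(w : {ffun 'I_s -> 'I_m}) \prod_j expR (lam * g (w j))).
  rewrite mulr_sumr; apply: eq_bigr => w _.
  rewrite mulrBr expRD mulr_sumr expR_sum; ring.
rewrite (@prod_sum_ffun _ _ (fun (_ : 'I_s) (x : 'I_m) => expR (lam * g x))) prodr_const card_ord /c exprMn exprVn; ring.
Qed.
End Chern.
Section Tail.
Variable R : realType.

Lemma one_side (m s : nat) (g : 'I_m -> R) (mu eps delta : R) :
  (1 < m)%N -> (0 < s)%N -> 0 < mu -> 0 < eps -> 0 < delta ->
  \sum_x g x = 0 -> (forall x, g x <= (m%:R - 1) * mu) ->
  \sum_x g x ^+ 2 <= m%:R * (m%:R - 1) * mu ^+ 2 ->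
  (m%:R - 1) * ln (2 / delta) / ((1 + eps) * ln (1 + eps) - eps) <= s%:R ->
  \sum_(w : {ffun 'I_s -> 'I_m} | eps * (s%:R * mu) <= \sum_j g (w j)) (m%:R ^+ s)^-1
    <= delta / 2.
Proof.
move=> m1 s0 mu0 e0 d0 gs gk g2 hs.
set k : R := m%:R - 1.
have k1 : 1 <= k by rewrite /k lerBrDr -(natrD R 1 1) ler_nat.
have k0 : 0 < k by apply: lt_le_trans k1.
set L := ln (1 + eps).
have eL : expR L = 1 + eps by rewrite /L lnK // posrE; lra.
have L0 : 0 < L by rewrite /L ln_gt0 // ltrDl.
set h := (1 + eps) * L - eps.
have h0 : 0 < h := @hpos R eps e0.
set lam := L / (k * mu).
have lam0 : 0 < lam by rewrite /lam divr_gt0 // mulr_gt0.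
have m0 : (0 < m)%N by apply: ltn_trans m1.
have mR : 0 < m%:R :> R by rewrite ltr0n.
have := @chernoff R m s g lam (eps * (s%:R * mu)) m0 (ltW lam0).
move=> /le_trans; apply.
have db := @draw_bound R m g k mu L k0 mu0 L0 gs gk g2.
rewrite -/lam in db.
have db' : (\sum_x expR (lam * g x)) / m%:R <= expR ((expR L - 1 - L) / k).
  by rewrite ler_pdivrMr // mulrC.
apply: le_trans (_ : expR (- (lam * (eps * (s%:R * mu)))) * expR ((expR L - 1 - L) / k) ^+ s <= _).
  apply: ler_wpM2l; first exact: expR_ge0.
  apply: lerXn2r => //; rewrite nnegrE ?expR_ge0 //.
  by apply: divr_ge0; [apply: sumr_ge0 => x _; exact: expR_ge0 | exact: ltW].
rewrite -expRM_natl -expRD eL.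
have -> : - (lam * (eps * (s%:R * mu))) + s%:R * ((1 + eps - 1 - L) / k) = - (s%:R * h / k).
  by rewrite /lam /h; field; rewrite !gt_eqF.
have hd : ln (2 / delta) <= s%:R * h / k.
  by rewrite ler_pdivlMr // mulrC -ler_pdivrMr.
have -> : delta / 2 = expR (- ln (2 / delta)).
  rewrite expRN lnK ?posrE ?divr_gt0 //; by rewrite invf_div.
by rewrite ler_expR lerN2.
Qed.
End Tail.
Section Tail2.
Variable R : realType.

Lemma tail (m s : nat) (f : 'I_m -> R) (C eps delta : R) :
  (1 < m)%N -> (0 < s)%N -> 0 < C -> 0 < eps -> 0 < delta ->
  (forall x, 0 <= f x) -> (forall x, f x <= m%:R / s%:R * C) ->
  \sum_x f x = m%:R / s%:R * C ->
  (m%:R - 1) * ln (2 / delta) / ((1 + eps) * ln (1 + eps) - eps) <= s%:R ->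
  \sum_(w : {ffun 'I_s -> 'I_m} | eps * C <= `|\sum_j f (w j) - C|) (m%:R ^+ s)^-1
    <= delta.
Proof.
move=> m1 s0 C0 e0 d0 f0 fC fs hs.
set mu := C / s%:R.
have sR : 0 < s%:R :> R by rewrite ltr0n.
have mu0 : 0 < mu by rewrite /mu divr_gt0.
have Cmu : C = s%:R * mu by rewrite /mu mulrC divfK // gt_eqF.
have mR : 2 <= m%:R :> R by rewrite ler_nat.
have fm : forall x, f x <= m%:R * mu by move=> x; rewrite /mu mulrA mulrAC; exact: fC.
have fs' : \sum_x f x = m%:R * mu by rewrite fs /mu mulrA mulrAC.
have sq : forall x, (f x - mu) ^+ 2 <= (m%:R - 2) * mu * f x + mu ^+ 2.
  move=> x; have := f0 x; have := fm x => a b.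
  have : f x * f x <= m%:R * mu * f x by rewrite ler_wpM2r.
  rewrite expr2; nra.
have Ssq : \sum_x (f x - mu) ^+ 2 <= m%:R * (m%:R - 1) * mu ^+ 2.
  apply: le_trans (ler_sum _ (fun x _ => sq x)) _.
  rewrite big_split /= -mulr_sumr fs' sumr_const card_ord.
  rewrite -[mu ^+ 2 *+ m]mulr_natl.
  by rewrite le_eqVlt; apply/orP; left; apply/eqP; ring.
have up := @one_side R m s (fun x => f x - mu) mu eps delta m1 s0 mu0 e0 d0.
have lo := @one_side R m s (fun x => mu - f x) mu eps delta m1 s0 mu0 e0 d0.
have S0 : \sum_x (f x - mu) = 0.
  by rewrite sumrB fs' sumr_const card_ord mulr_natl subrr.
have S1 : \sum_x (mu - f x) = 0.
  by rewrite sumrB fs' sumr_const card_ord mulr_natl subrr.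
have gk1 : forall x, f x - mu <= (m%:R - 1) * mu by move=> x; have := fm x; lra.
have gk2 : forall x, mu - f x <= (m%:R - 1) * mu by move=> x; have := f0 x; nra.
have Ssq2 : \sum_x (mu - f x) ^+ 2 <= m%:R * (m%:R - 1) * mu ^+ 2.
  by under eq_bigr do rewrite -opprB sqrrN.
have hup := up S0 gk1 Ssq hs.
have hlo := lo S1 gk2 Ssq2 hs.
have c0 : 0 <= (m%:R ^+ s)^-1 :> R by rewrite invr_ge0 exprn_ge0.
rewrite Cmu big_mkcond /=.
apply: le_trans (_ : \sum_(w : {ffun 'I_s -> 'I_m})
   ((if eps * (s%:R * mu) <= \sum_j (f (w j) - mu) then (m%:R ^+ s)^-1 else 0)
  + (if eps * (s%:R * mu) <= \sum_j (mu - f (w j)) then (m%:R ^+ s)^-1 else 0)) <= _).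
  apply: ler_sum => w _.
  have e1 : \sum_j (f (w j) - mu) = \sum_j f (w j) - s%:R * mu.
    by rewrite sumrB sumr_const card_ord mulr_natl.
  have e2 : \sum_j (mu - f (w j)) = - (\sum_j f (w j) - s%:R * mu).
    by rewrite sumrB sumr_const card_ord mulr_natl opprB.
  rewrite e1 e2; set D := \sum_j f (w j) - s%:R * mu.
  case: ifP => hD; last by apply: addr_ge0; case: ifP.
  case: (lerP 0 D) => D0.
    by rewrite ger0_norm // in hD; rewrite hD lerDl; case: ifP.
  by rewrite ltr0_norm // in hD; rewrite hD lerDr; case: ifP.
rewrite big_split /= -!big_mkcond /=.
have -> : delta = delta / 2 + delta / 2 by field.
exact: lerD.
Qed.
End Tail2.

End AnalysisPart.


Section Bern.
Variable R : realType.
Variable I : finType.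
Variable p : R.
Hypothesis p0 : 0 < p.
Hypothesis p1 : p <= 1.

Definition wt (w : {ffun I -> bool}) : R := \prod_u (if w u then p else 1 - p).
Definition z (w : {ffun I -> bool}) u : R := (w u)%:R - p.

Lemma wt_ge0 w : 0 <= wt w.
Proof. by apply: prodr_ge0 => u _; case: (w u) => /=; [exact: ltW | rewrite subr_ge0]. Qed.

Lemma prod_if1 (u : I) (F : I -> R) : \prod_t (if t == u then F t else 1) = F u.
Proof. by rewrite -big_mkcond big_pred1_eq. Qed.

Lemma Ezz u v : \sum_w wt w * (z w u * z w v) = if u == v then p * (1 - p) else 0.
Proof.
pose G t (b : bool) : R := (if b then p else 1 - p) *
   ((if t == u then b%:R - p else 1) * (if t == v then b%:R - p else 1)).
transitivity (\sum_(w : {ffun I -> bool}) \prod_t G t (w t)).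
  apply: eq_bigr => w _; rewrite /G big_split /= big_split /= !prod_if1.
  by rewrite /wt /z.
rewrite (@prod_sum_ffun R _ _ G).
under eq_bigr do rewrite big_bool /G /=.
case: (eqVneq u v) => [<-|uv].
  rewrite (bigD1 u) //= eqxx big1 ?mulr1; first by ring.
  by move=> t /negPf ->; ring.
rewrite (bigD1 u) //= eqxx (negPf uv).
by rewrite [X in X * _](_ : _ = 0) ?mul0r //; ring.
Qed.

Lemma Ew1 : \sum_w wt w = 1.
Proof.
rewrite /wt (@prod_sum_ffun R _ _ (fun (_ : I) (b : bool) => if b then p else 1 - p)) big1 // => t _; rewrite big_bool /=; ring.
Qed.

Lemma Var_eq (b : I -> R) :
  \sum_w wt w * (\sum_u z w u * b u) ^+ 2 = \sum_u b u ^+ 2 * (p * (1 - p)).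
Proof.
transitivity (\sum_u \sum_v b u * b v * \sum_w wt w * (z w u * z w v)).
  transitivity (\sum_w \sum_u \sum_v b u * b v * (wt w * (z w u * z w v))).
    apply: eq_bigr => w _; rewrite expr2 mulr_suml mulr_sumr.
    apply: eq_bigr => u _; rewrite mulr_sumr mulr_sumr.
    by apply: eq_bigr => v _; ring.
  rewrite exchange_big; apply: eq_bigr => u _.
  rewrite exchange_big; apply: eq_bigr => v _.
  by rewrite mulr_sumr.
apply: eq_bigr => u _.
under eq_bigr do rewrite Ezz.
rewrite (bigD1 u) //= eqxx big1 ?addr0; first by ring.
by move=> i; rewrite eq_sym => /negPf ->; ring.
Qed.

Lemma sumsq_le (a : I -> R) : (forall u, 0 <= a u) ->
  \sum_u a u ^+ 2 <= (\sum_u a u) ^+ 2.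
Proof.
move=> a0; rewrite [X in _ <= X]expr2 mulr_suml; apply: ler_sum => u _.
rewrite expr2 ler_wpM2l //. 
by rewrite (bigD1 u) //= lerDl sumr_ge0.
Qed.

Lemma bern_est (a : I -> R) (eps delta : R) : (forall u, 0 <= a u) ->
  (1 + delta * eps ^+ 2)^-1 <= p -> 0 < eps -> 0 < delta -> 0 < \sum_u a u ->
  \sum_(w : {ffun I -> bool} | eps * \sum_u a u <= `|\sum_(u | w u) a u / p - \sum_u a u|) wt w
    <= delta.
Proof.
move=> a0 hp e0 d0 C0.
set C := \sum_u a u.
have hD : forall w : {ffun I -> bool}, \sum_(u | w u) a u / p - C = \sum_u z w u * (a u / p).
  move=> w; rewrite /C big_mkcond /=.
  have -> : \sum_u a u = \sum_u p * (a u / p).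
    by apply: eq_bigr => u _; rewrite mulrC divfK // gt_eqF.
  rewrite -sumrB; apply: eq_bigr => u _; rewrite /z.
  by case: (w u) => /=; ring.
have eC : 0 < eps * C by rewrite mulr_gt0.
apply: le_trans (_ : \sum_w wt w * ((\sum_u z w u * (a u / p)) ^+ 2 / (eps * C) ^+ 2) <= _).
  rewrite big_mkcond /=; apply: ler_sum => w _.
  case: ifP => [h|_]; last first.
    by rewrite mulr_ge0 ?wt_ge0 // divr_ge0 ?sqr_ge0.
  rewrite -[X in X <= _]mulr1 ler_wpM2l ?wt_ge0 //.
  rewrite ler_pdivlMr ?exprn_gt0 // mul1r -hD.
  apply: le_trans (_ : `|\sum_(u | w u) a u / p - C| ^+ 2 <= _).
    by apply: lerXn2r; rewrite ?nnegrE // ltW.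
  by rewrite real_normK ?num_real.
under eq_bigr do rewrite mulrA.
rewrite -mulr_suml Var_eq.
have hs := @sumsq_le a a0; rewrite -/C in hs.
set q := delta * eps ^+ 2.
have q0 : 0 < q by rewrite /q mulr_gt0 // exprn_gt0.
have pe : (1 - p) / p <= q.
  have h1 : 0 < 1 + q by lra.
  rewrite -div1r ler_pdivrMr // in hp.
  have p0x := p0; rewrite mulrDr mulr1 -/q in hp; rewrite ler_pdivrMr //; lra.
have p0x := p0; have p1x := p1.
have E : \sum_u (a u / p) ^+ 2 * (p * (1 - p)) = ((1 - p) / p) * \sum_u a u ^+ 2.
  rewrite mulr_sumr; apply: eq_bigr => u _; by field; rewrite gt_eqF.
rewrite E.
have r0 : 0 <= (1 - p) / p by rewrite divr_ge0 // ?subr_ge0 // ltW.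
apply: le_trans (_ : (1 - p) / p * C ^+ 2 / (eps * C) ^+ 2 <= _).
  by rewrite ler_wpM2r ?invr_ge0 ?sqr_ge0 // ler_wpM2l.
have -> : (1 - p) / p * C ^+ 2 / (eps * C) ^+ 2 = ((1 - p) / p) / eps ^+ 2.
  by field; rewrite !gt_eqF.
by rewrite ler_pdivrMr ?exprn_gt0.
Qed.
End Bern.


Lemma cards_sum (T : finType) (P : pred T) : #|[set x | P x]| = (\sum_x (P x : nat))%N.
Proof.
rewrite -sum1_card big_mkcond /=; apply: eq_bigr => x _; rewrite inE.
by case: (P x).
Qed.

Lemma sum_pair (I J : finType) (G : I * J -> nat) :
  (\sum_(p : I * J) G p = \sum_i \sum_j G (i, j))%N.
Proof. by rewrite pair_bigA; apply: eq_bigr => -[]. Qed.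

Section Comb.
Variables (R : realType) (U L : finType) (m : nat) (E : 'I_m -> U * L * R).

Lemma count_sum (i : 'I_6) (tau : R) :
  count_inst E i tau = \sum_e count_inst_e E i tau e.
Proof.
rewrite /count_inst /count_inst_e -natr_sum; congr (_%:R).
rewrite cards_sum sum_pair sum_pair sum_pair.
apply: eq_bigr => a _.
by rewrite cards_sum sum_pair sum_pair.
Qed.

Lemma m_gt1 (i : 'I_6) (tau : R) : 0 < count_inst E i tau -> (1 < m)%N.
Proof.
rewrite /count_inst ltr0n card_gt0 => /set0Pn [x]; rewrite inE.
move=> /andP[_ /andP[_ /andP[_ /andP[_ /andP[hab _]]]]].
case: (ltnP 1 m) => // hm; exfalso.
move: (x.1.1.1) (x.1.1.2) hab => a b hab.
have : a = b.
  apply: val_inj => /=.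
  have h1 := ltn_ord a; have h2 := ltn_ord b; lia.
by move=> h; rewrite h eqxx in hab.
Qed.

Lemma node_est (K : finType) (key : 'I_m -> K) (c : 'I_m -> R) (p : R)
    (w : {ffun K -> bool}) :
  \sum_(e | w (key e)) c e / p = \sum_(u | w u) (\sum_(e | key e == u) c e) / p.
Proof.
rewrite (partition_big key w) //=; apply: eq_bigr => u wu.
rewrite mulr_suml; apply: eq_bigl => e.
by case: eqP => [->|]; rewrite ?wu ?andbF.
Qed.

Lemma node_sum (K : finType) (key : 'I_m -> K) (c : 'I_m -> R) :
  \sum_u \sum_(e | key e == u) c e = \sum_e c e.
Proof. by rewrite [RHS](partition_big key xpredT). Qed.

Lemma sum_const_card (T : finType) (P : pred T) (v : R) :
  \sum_(x | P x) v = #|[set x | P x]|%:R * v.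
Proof.
rewrite -sum1_card natr_sum mulr_suml.
by apply: eq_big => [x|x _]; [rewrite inE | rewrite mul1r].
Qed.

Definition fI (i : 'I_6) (tau c : R) (s : nat) (x : 'I_m) : R :=
  \sum_(e | (et E x <= et E e) && (et E e <= et E x + c * tau))
      m%:R / (s%:R * mprime E c tau e) * count_inst_e E i tau e.

Lemma mprime_ge1 (c tau : R) e : 0 <= c * tau -> 1 <= mprime E c tau e.
Proof.
move=> ct; rewrite /mprime ler1n card_gt0; apply/set0Pn; exists e.
by rewrite inE lexx andbT lerBlDr lerDl.
Qed.

Lemma fI_sum (i : 'I_6) (tau c : R) (s : nat) : 0 <= c * tau -> (0 < s)%N ->
  \sum_x fI i tau c s x = m%:R / s%:R * count_inst E i tau.
Proof.
move=> ct s0; rewrite /fI.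
under eq_bigr do rewrite big_mkcond.
rewrite exchange_big /= count_sum mulr_sumr; apply: eq_bigr => e _.
rewrite -big_mkcond /= sum_const_card.
have -> : [set x | (et E x <= et E e) && (et E e <= et E x + c * tau)]
          = [set f | (et E e - c * tau <= et E f) && (et E f <= et E e)].
  by apply/setP => x; rewrite !inE lerBlDr andbC.
have h1 := @mprime_ge1 c tau e ct.
rewrite -/(mprime E c tau e).
field.
rewrite /mprime in h1; apply/andP; split; first by rewrite pnatr_eq0 -lt0n.
by rewrite gt_eqF // (lt_le_trans ltr01 h1).
Qed.

Lemma fI_ge0 (i : 'I_6) (tau c : R) (s : nat) x : 0 <= c * tau -> 0 <= fI i tau c s x.
Proof.
move=> ct; apply: sumr_ge0 => e _; apply: mulr_ge0; last exact: ler0n.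
apply: divr_ge0; first exact: ler0n.
apply: mulr_ge0; first exact: ler0n.
exact: le_trans ler01 (@mprime_ge1 c tau e ct).
Qed.

Lemma fI_le (i : 'I_6) (tau c : R) (s : nat) x : 0 <= c * tau -> (0 < s)%N ->
  fI i tau c s x <= m%:R / s%:R * count_inst E i tau.
Proof.
move=> ct s0; rewrite count_sum mulr_sumr /fI.
apply: le_trans (_ : \sum_e m%:R / (s%:R * mprime E c tau e) * count_inst_e E i tau e <= _).
  rewrite [X in X <= _]big_mkcond /=; apply: ler_sum => e _.
  case: ifP => // _; apply: mulr_ge0; last exact: ler0n.
  apply: divr_ge0; first exact: ler0n.
  apply: mulr_ge0; first exact: ler0n.
  exact: le_trans ler01 (@mprime_ge1 c tau e ct).
apply: ler_sum => e _; apply: ler_wpM2r; first exact: ler0n.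
have h1 := @mprime_ge1 c tau e ct.
rewrite invfM mulrA; apply: ler_piMr.
  by apply: divr_ge0; exact: ler0n.
by rewrite invf_le1 // (lt_le_trans ltr01 h1).
Qed.
End Comb.

Theorem theorem4p3 (R : realType) (U L : finType) (m : nat)
    (E : 'I_m -> U * L * R) (tau : R) (i : 'I_6) (eps delta : R) :
  (forall e : 'I_m, 0 < et E e) ->
  0 < tau ->
  0 < eps < 1 -> 0 < delta < 1 ->
  0 < count_inst E i tau ->
  (forall p : R, (1 + delta * eps ^+ 2)^-1 <= p -> p <= 1 ->
     [/\ eps_delta_estimator (tbcE_weight p) (tbcE_est E i tau p)
           (count_inst E i tau) eps delta,
         eps_delta_estimator (tbcNU_weight p) (tbcNU_est E i tau p)
           (count_inst E i tau) eps delta &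
         eps_delta_estimator (tbcNL_weight p) (tbcNL_est E i tau p)
           (count_inst E i tau) eps delta]) /\
  (forall (c : R) (s : nat), 0 < c -> (0 < s)%N ->
     (m%:R - 1) * ln (2 / delta) / ((1 + eps) * ln (1 + eps) - eps) <= s%:R ->
     eps_delta_estimator (@tbcI_weight R m s) (tbcI_est E i tau c (s:=s))
       (count_inst E i tau) eps delta).
Proof.
move=> et0 tau0 /andP[e0 e1] /andP[d0 d1] C0.
split.
  move=> p hp p1.
  have q0 : 0 < 1 + delta * eps ^+ 2 by have := sqr_ge0 eps; nra.
  have p0 : 0 < p by apply: lt_le_trans hp; rewrite invr_gt0.
  have a0 : forall e, 0 <= count_inst_e E i tau e by move=> e; exact: ler0n.
  split.
  - rewrite /eps_delta_estimator /prob count_sum; rewrite count_sum in C0.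
    exact: (@bern_est R _ p p0 p1 (count_inst_e E i tau) eps delta a0 hp e0 d0 C0).
  - rewrite /eps_delta_estimator /prob.
    under eq_bigl => w do rewrite /tbcNU_est node_est.
    rewrite count_sum -(@node_sum R m _ (eu E)); rewrite count_sum -(@node_sum R m _ (eu E)) in C0.
    apply: (@bern_est R _ p p0 p1 _ eps delta _ hp e0 d0 C0).
    by move=> u; apply: sumr_ge0 => e _.
  - rewrite /eps_delta_estimator /prob.
    under eq_bigl => w do rewrite /tbcNL_est node_est.
    rewrite count_sum -(@node_sum R m _ (el E)); rewrite count_sum -(@node_sum R m _ (el E)) in C0.
    apply: (@bern_est R _ p p0 p1 _ eps delta _ hp e0 d0 C0).
    by move=> u; apply: sumr_ge0 => e _.
move=> c s c0 s0 hs; rewrite /eps_delta_estimator /prob.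
have ct : 0 <= c * tau by rewrite mulr_ge0 // ltW.
exact: (@tail R m s (fI R U L m E i tau c s) _ eps delta (@m_gt1 R U L m E i tau C0) s0 C0 e0 d0
  (fun x => @fI_ge0 R U L m E i tau c s x ct) (fun x => @fI_le R U L m E i tau c s x ct s0)
  (@fI_sum R U L m E i tau c s ct s0) hs).
Qed.
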